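(* There exists an $HS(3,K_4^{(3)}+e;15,5)$.
   Context: $K_4^{(3)}+e$ denotes the 3-uniform hypergraph with vertex set $\{1,2,3,4,5\}$ and edge set $\{\{1,2,3\},\{1,2,4\},\{1,3,4\},\{2,3,4\},\{3,4,5\}\}$. An $HS(3,K_4^{(3)}+e;v,s)$ is a collection of hypergraphs (blocks) on subsets of a $v$-set $V$, each isomorphic to $K_4^{(3)}+e$, whose edge sets partition the set of all 3-subsets of $V$ that are not contained in a fixed $s$-subset of $V$ (the hole). *)

(* Defs.v *)
From mathcomp Require Import all_boot.
Set Implicit Arguments. Unset Strict Implicit. Unset Printing Implicit Defensive.

(* K_4^{(3)}+e on vertex set 'I_5 (vertex i+1 of the paper is i here):
   edges {1,2,3},{1,2,4},{1,3,4},{2,3,4},{3,4,5}. *)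
Definition K4e_edges : seq {set 'I_5} :=
  [:: [set (inord 0 : 'I_5); inord 1; inord 2];
      [set (inord 0 : 'I_5); inord 1; inord 3];
      [set (inord 0 : 'I_5); inord 2; inord 3];
      [set (inord 1 : 'I_5); inord 2; inord 3];
      [set (inord 2 : 'I_5); inord 3; inord 4]].

Definition block_edges (V : finType) (f : {ffun 'I_5 -> V}) : seq {set V} :=
  map (fun e : {set 'I_5} => [set f x | x in e]) K4e_edges.

(* B is an HS(3, K_4^{(3)}+e; |V|, |H|) with hole H: the (multiset of) edge
   sets of the blocks partition the 3-subsets of V not contained in H. *)
Definition is_HS_K4e (V : finType) (H : {set V}) (B : seq {ffun 'I_5 -> V}) : Prop :=
  (forall f, f \in B -> injective f) /\
  (forall T : {set V},
     count (pred1 T) (flatten (map (@block_edges V) B)) =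
     (if (#|T| == 3) && ~~ (T \subset H) then 1 else 0)).

(* Main.v *)
Require Import Defs.
From mathcomp Require Import all_boot.

Definition tset (s : seq nat) : {set 'I_15} := [set x : 'I_15 | val x \in s].
Definition eqm (s t : seq nat) := all (fun i => (i \in s) == (i \in t)) (iota 0 15).
Definition subm (s t : seq nat) := all (fun i => (i \in s) ==> (i \in t)) (iota 0 15).

Lemma tset_eq s t : (tset s == tset t) = eqm s t.
Proof.
apply/eqP/allP => [E i | H].
  rewrite mem_iota add0n => /andP[_ hi].
  by move/setP: E => /(_ (Ordinal hi)); rewrite !inE /= => ->.
apply/setP => x; rewrite !inE; apply/eqP/H.
by rewrite mem_iota add0n ltn_ord.
Qed.

Lemma tset_sub s t : (tset s \subset tset t) = subm s t.
Proof.
apply/subsetP/allP => [E i | H].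
  rewrite mem_iota add0n => /andP[_ hi]; apply/implyP => his.
  have := E (Ordinal hi); rewrite !inE /=; exact.
move=> x; rewrite !inE => xs.
have := H (val x); rewrite mem_iota add0n ltn_ord => /(_ isT) /implyP; exact.
Qed.

Lemma tset_card s : uniq s -> #|tset s| = count (fun i => i < 15) s.
Proof.
move=> Us.
have -> : tset s = [set x in pmap (insub : nat -> option 'I_15) s].
  by apply/setP => x; rewrite !inE mem_pmap_sub.
by rewrite cardsE (card_uniqP _) ?size_pmap_sub //; apply: pmap_sub_uniq.
Qed.

Definition mk (l : seq nat) : {ffun 'I_5 -> 'I_15} := [ffun i : 'I_5 => inord (nth 0 l i)].

Lemma nth_lt l i : all (fun x => x < 15) l -> nth 0 l i < 15.
Proof.
move=> /allP A; case: (ltnP i (size l)) => h; first by apply: A; apply: mem_nth.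
by rewrite nth_default.
Qed.

Lemma mk_inj l : size l = 5 -> uniq l -> all (fun x => x < 15) l -> injective (mk l).
Proof.
move=> Sl Ul Al i j E; have := congr1 val E; rewrite /mk !ffunE /=.
rewrite !inordK ?nth_lt // => /eqP; rewrite nth_uniq ?Sl // => /eqP; exact: val_inj.
Qed.

Lemma imset3 l i j k : all (fun x => x < 15) l -> i < 5 -> j < 5 -> k < 5 ->
  [set mk l x | x in [set (inord i : 'I_5); inord j; inord k]] =
  tset [:: nth 0 l i; nth 0 l j; nth 0 l k].
Proof.
move=> Al hi hj hk.
rewrite !imsetU ?imsetU1 !imset_set1 !ffunE !inordK //.
apply/setP => x; rewrite !inE -!(inj_eq val_inj) /= !inordK ?nth_lt //.
by rewrite orbA.
Qed.

Definition edges_of (l : seq nat) : seq (seq nat) :=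
  [:: [:: nth 0 l 0; nth 0 l 1; nth 0 l 2];
      [:: nth 0 l 0; nth 0 l 1; nth 0 l 3];
      [:: nth 0 l 0; nth 0 l 2; nth 0 l 3];
      [:: nth 0 l 1; nth 0 l 2; nth 0 l 3];
      [:: nth 0 l 2; nth 0 l 3; nth 0 l 4]].

Lemma blockE l : all (fun x => x < 15) l -> block_edges (mk l) = map tset (edges_of l).
Proof.
move=> Al; rewrite /block_edges /K4e_edges /=.
by rewrite !imset3.
Qed.

Definition Ls : seq (seq nat) := [:: [:: 2; 11; 5; 8; 14]; [:: 2; 12; 6; 8; 13]; [:: 2; 9; 0; 7; 12]; [:: 7; 11; 1; 5; 3]; [:: 3; 7; 6; 10; 11]; [:: 5; 8; 3; 10; 14]; [:: 2; 10; 5; 13; 7]; [:: 1; 6; 8; 11; 4]; [:: 5; 7; 3; 9; 10]; [:: 2; 4; 8; 14; 3]; [:: 4; 6; 8; 10; 1]; [:: 2; 13; 1; 14; 4]; [:: 5; 14; 3; 12; 8]; [:: 0; 11; 5; 10; 12]; [:: 5; 10; 1; 14; 11]; [:: 7; 10; 8; 9; 2]; [:: 4; 8; 0; 12; 11]; [:: 1; 11; 4; 10; 13]; [:: 3; 13; 6; 12; 9]; [:: 0; 13; 6; 7; 14]; [:: 1; 6; 9; 14; 3]; [:: 6; 10; 5; 9; 11]; [:: 3; 8; 0; 11; 14]; [:: 9; 12; 2; 3; 14]; [:: 3; 13; 4; 14; 7]; [:: 6; 7; 4; 9; 10]; [:: 7; 9; 12; 14; 2]; [:: 6; 14; 2;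 10; 7]; [:: 6; 10; 1; 13; 12]; [:: 2; 12; 1; 11; 13]; [:: 10; 11; 7; 14; 5]; [:: 5; 6; 3; 4; 0]; [:: 6; 14; 3; 11; 7]; [:: 8; 14; 10; 12; 4]; [:: 5; 9; 0; 12; 13]; [:: 2; 5; 0; 3; 12]; [:: 8; 11; 9; 14; 4]; [:: 1; 5; 9; 13; 3]; [:: 0; 5; 1; 4; 6]; [:: 9; 11; 10; 12; 2]; [:: 4; 9; 2; 11; 14]; [:: 10; 13; 9; 14; 0]; [:: 2; 10; 1; 9; 7]; [:: 6; 14; 4; 12; 2]; [:: 9; 14; 2; 5; 4]; [:: 5; 14; 4; 11; 7]; [:: 8; 9; 3; 6; 0]; [:: 3; 5; 11; 13; 2]; [:: 9; 13; 7; 11; 0]; [:: 9; 12; 1; 4; 7]; [:: 6; 12; 0; 10; 9]; [:: 8; 13; 0; 5; 14]; [:: 6; 9; 0; 11; 2]; [:: 0; 6; 2; 4; 10]; [:: 4; 5; 7; 10; 1]; [:: 5; 6; 13; 14; 0]; [:: 10; 14; 0; 4; 7]; [:: 10; 11; 2; 3; 6]; [:: 5; 13; 4; 12; 7]; [:: 5; 8; 1; 12; 14]; [:: 9; 11; 1; 3; 13]; [:: 8; 9; 12; 13; 2]; [:: 11; 12; 7; 8; 0]; [:: 11; 13; 12; 14; 0]; [:: 4; 8; 3; 7; 12]; [:: 5; 8; 4; 9; 3]; [:: 6; 7; 1; 12; 0]; [:: 11; 12; 3; 4; 10]; [:: 6; 9; 2; 13; 0]; [:: 11; 12; 5; 6;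 0]; [:: 8; 10; 11; 13; 0]; [:: 2; 4; 1; 3; 6]; [:: 7; 13; 8; 14; 1]; [:: 6; 11; 2; 7; 3]; [:: 3; 13; 0; 10; 7]; [:: 4; 13; 2; 7; 14]; [:: 8; 10; 0; 2; 14]; [:: 8; 14; 0; 6; 1]; [:: 2; 7; 1; 8; 3]; [:: 10; 12; 7; 13; 1]; [:: 8; 9; 0; 1; 11]; [:: 3; 12; 1; 10; 0]; [:: 5; 7; 2; 12; 0]; [:: 6; 13; 4; 11; 0]; [:: 6; 8; 5; 7; 0]; [:: 4; 13; 0; 9; 3]; [:: 5; 6; 1; 2; 0]; [:: 2; 8; 3; 13; 7]; [:: 4; 8; 1; 13; 0]].

Definition Lt := flatten (map edges_of Ls).
Definition hole := [:: 0; 1; 3; 7; 14].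

Definition chk :=
  all (fun a => all (fun b => all (fun c => uniq [:: a; b; c] ==>
     (count (fun s => eqm s [:: a; b; c]) Lt == (if subm [:: a; b; c] hole then 0 else 1)))
     (iota 0 15)) (iota 0 15)) (iota 0 15).

Lemma chk_ok : chk. Proof. vm_compute. reflexivity. Qed.

Lemma Ls_ok : all (fun l => (size l == 5) && uniq l && all (fun x => x < 15) l) Ls.
Proof. vm_compute. reflexivity. Qed.

Lemma Lt_ok : all (fun s => uniq s && (count (fun i => i < 15) s == 3)) Lt.
Proof. vm_compute. reflexivity. Qed.

Theorem lemma3p7 :
  exists (H : {set 'I_15}) (B : seq {ffun 'I_5 -> 'I_15}),
    #|H| = 5 /\ is_HS_K4e H B.
Proof.
exists (tset hole), (map mk Ls); split; first by rewrite tset_card.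
have LsA := allP Ls_ok.
split.
  move=> f /mapP [l /LsA /andP [/andP [/eqP S U] A] ->]; exact: mk_inj.
have -> : flatten (map (@block_edges _) (map mk Ls)) = map tset Lt.
  rewrite /Lt map_flatten -map_comp; congr flatten; rewrite -map_comp; apply/eq_in_map => l /LsA.
  by move=> /andP [_ A] /=; rewrite blockE.
move=> T.
case: (boolP (#|T| == 3)) => T3; last first.
  change (count_mem T (map tset Lt) = 0).
  apply/count_memPn; apply: contra T3 => /mapP [s /(allP Lt_ok) /andP [U /eqP C] ->].
  by rewrite tset_card // C.
have [s [Hall U Hs TE]] : exists s, [/\ all (fun i => i < 15) s, uniq s, size s = 3 & T = tset s].
  exists (map val (enum T)); split.
  - by apply/allP => i /mapP [x _ ->]; exact: ltn_ord.
  - by rewrite (map_inj_uniq val_inj) enum_uniq.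
  - by rewrite size_map -cardE; apply/eqP.
  - by apply/setP => x; rewrite inE (mem_map val_inj) mem_enum.
rewrite TE; case: s Hall U Hs TE => [|a [|b [|c [|d r]]]] Hall U Hs TE; try discriminate Hs.
move: Hall; rewrite [all _ _]/= => /andP [ha /andP [hb /andP [hc _]]].
rewrite count_map (eq_count (a2 := fun s => eqm s [:: a; b; c])); last first.
  by move=> s /=; rewrite tset_eq.
have := allP chk_ok a; rewrite mem_iota ha => /(_ isT) /allP /(_ b).
rewrite mem_iota hb => /(_ isT) /allP /(_ c); rewrite mem_iota hc => /(_ isT).
rewrite U /= => /eqP ->.
rewrite -tset_sub.
by case: (tset [:: a; b; c] \subset tset hole).
Qed.
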